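(* Let $U$ be a countably infinite universe and $\mathcal{C}=(L_1,L_2,\ldots)$ a countably infinite collection of languages over $U$, and let $\mathcal{C}(L_i)$ and $m^\star(L_i)$ be as determined by the Procedure in the context. For every $i\ge1$, $\mathcal{C}(L_i)$ is either empty, or contains at least one entry $L_j\ne L_i$ with $j<i$; furthermore, every entry $L_j\ne L_i$ of $\mathcal{C}(L_i)$ satisfies $m^\star(L_j)<m^\star(L_i)$.
   Context: A language is an infinite subset of $U$; a collection is a sequence of languages (repetitions allowed, entries distinguished by index). Procedure. Set $\mathcal{C}'_0=()$. For $i=1,2,3,\ldots$: append the entry $L_i$ at the end of $\mathcal{C}'_{i-1}$ to get $\mathcal{C}'_i=(L'_1,\ldots,L'_i)$ (a permutation of the entries $L_1,\ldots,L_i$), and set $j=i$. Repeat: (1) among all subcollections $\mathcal{D}$ of the entries $(L'_1,\ldots,L'_j)$ that include the entry $L'_j$ and satisfy $|\bigcap_{L\in\mathcal{D}}L|<\infty$, let $\mathcal{C}_{\mathrm{chk}}$ be one maximizing $|\bigcap_{L\in\mathcal{D}}L|$ and $m_{\mathrm{chk}}$ this maximum; if no such $\mathcal{D}$ exists, set $\mathcal{C}_{\mathrm{chk}}=()$, $m_{\mathrm{chk}}=0$. (2) If $j\le1$ or $m_{\mathrm{chk}}>m^\star(L'_{j-1})$ (already fixed since $L'_{j-1}$ has original index $<i$), stop the loop. (3) Otherwise swap positions $j-1$ and $j$ in $\mathcal{C}'_i$, set $j\leftarrow j-1$ and return to (1). When the loop stops, set $\mathcal{C}(L_i)=\mathcal{C}_{\mathrm{chk}}$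 and $m^\star(L_i)=m_{\mathrm{chk}}$. *)

(* Defs.v *)
From Stdlib Require Import List Arith Lia.
Import ListNotations.

Definition finite_set {U : Type} (A : U -> Prop) : Prop :=
  exists s : list U, forall x, A x -> In x s.

Definition infinite_set {U : Type} (A : U -> Prop) : Prop := ~ finite_set A.

Definition card_is {U : Type} (A : U -> Prop) (n : nat) : Prop :=
  exists s : list U, NoDup s /\ length s = n /\ (forall x, A x <-> In x s).

Definition countably_infinite (U : Type) : Prop :=
  exists f : nat -> U, (forall a b, f a = f b -> a = b) /\ (forall u, exists n, f n = u).

(* The collection: L i for i >= 1 (index 0 unused).
   A subcollection of entries is a list of original indices.
   Intersection of the languages of a subcollection: *)
Definition inter {U : Type} (L : nat -> U -> Prop) (D : list nat) : U -> Prop :=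
  fun x => forall k, In k D -> L k x.

(* The entry at 1-based position j of the current ordering p
   (p is a list of original indices). *)
Definition pos (p : list nat) (j : nat) : nat := nth (j - 1) p 0.

Definition admissible {U : Type} (L : nat -> U -> Prop) (p : list nat) (j : nat)
  (D : list nat) (m : nat) : Prop :=
  NoDup D /\ (forall k, In k D -> In k (firstn j p)) /\ In (pos p j) D /\
  card_is (inter L D) m.

Definition chk_spec {U : Type} (L : nat -> U -> Prop) (p : list nat) (j : nat)
  (Cchk : list nat) (mchk : nat) : Prop :=
  (admissible L p j Cchk mchk /\
     (forall D m, admissible L p j D m -> m <= mchk))
  \/
  ((forall D m, ~ admissible L p j D m) /\ Cchk = [] /\ mchk = 0).

Definition swap_at (p : list nat) (j : nat) : list nat :=
  firstn (j - 2) p ++ [pos p j; pos p (j - 1)] ++ skipn j p.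

(* The inner loop, started at position j on ordering p, ends with
   final ordering, C_chk and m_chk.  mstar gives the (already fixed) values
   m^*(L_k) for earlier entries. *)
Inductive Loop {U : Type} (L : nat -> U -> Prop) (mstar : nat -> nat) :
  list nat -> nat -> list nat -> list nat -> nat -> Prop :=
| Loop_stop : forall p j C m,
    chk_spec L p j C m ->
    (j <= 1 \/ mstar (pos p (j - 1)) < m) ->
    Loop L mstar p j p C m
| Loop_swap : forall p j C m p' C' m',
    chk_spec L p j C m ->
    ~ (j <= 1 \/ mstar (pos p (j - 1)) < m) ->
    Loop L mstar (swap_at p j) (j - 1) p' C' m' ->
    Loop L mstar p j p' C' m'.

(* A complete run of the Procedure: perm i = C'_i, Cof i = C(L_i),
   mstar i = m^*(L_i), for all i >= 1. *)
Definition Run {U : Type} (L : nat -> U -> Prop) (perm : nat -> list nat)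
  (Cof : nat -> list nat) (mstar : nat -> nat) : Prop :=
  perm 0 = [] /\
  forall i, 1 <= i ->
    Loop L mstar (perm (i - 1) ++ [i]) i (perm i) (Cof i) (mstar i).

(* Main.v *)
Require Import Defs.
From Stdlib Require Import List Arith.
From Stdlib Require Import Lia Sorted Classical.
Import ListNotations.

Section Aux.
Variable R : nat -> nat -> Prop.

Lemma SS_app_l (a b : list nat) : StronglySorted R (a ++ b) -> StronglySorted R a.
Proof.
  induction a as [|z a IH]; simpl; intros H. constructor.
  apply StronglySorted_inv in H as [H1 H2]. constructor. auto.
  rewrite Forall_forall in *. intros y Hy. apply H2. apply in_app_iff; auto.
Qed.

Lemma SS_app_cross (a b : list nat) : StronglySorted R (a ++ b) ->
  forall x y, In x a -> In y b -> R x y.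
Proof.
  induction a as [|z a IH]; simpl; intros H x y Hx Hy. contradiction.
  apply StronglySorted_inv in H as [H1 H2]. destruct Hx as [<-|Hx].
  - rewrite Forall_forall in H2. apply H2. apply in_app_iff; auto.
  - eauto.
Qed.

Lemma SS_insert (a c : list nat) x : StronglySorted R (a ++ c) ->
  (forall y, In y a -> R y x) -> (forall y, In y c -> R x y) ->
  StronglySorted R (a ++ x :: c).
Proof.
  induction a as [|z a IH]; simpl; intros H H1 H2.
  - constructor; auto. apply Forall_forall; auto.
  - apply StronglySorted_inv in H as [H3 H4]. constructor; auto.
    rewrite Forall_forall in *. intros y Hy. apply in_app_iff in Hy as [Hy|[<-|Hy]].
    + apply H4, in_app_iff; auto.
    + auto.
    + apply H4, in_app_iff; auto.
Qed.
End Aux.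

Lemma firstn_mid (a b : list nat) i : firstn (S (length a)) (a ++ i :: b) = a ++ [i].
Proof. induction a; simpl; auto; f_equal; auto. Qed.

Lemma nth_mid (a b : list nat) i d : nth (length a) (a ++ i :: b) d = i.
Proof. induction a; simpl; auto. Qed.

Lemma skipn_mid (a b : list nat) : skipn (length a) (a ++ b) = b.
Proof. induction a; simpl; auto. Qed.

Lemma firstn_mid0 (a b : list nat) : firstn (length a) (a ++ b) = a.
Proof. induction a; simpl; auto; f_equal; auto. Qed.

Lemma adm_char {U} (L : nat -> U -> Prop) a b i D m :
  admissible L (a ++ i :: b) (S (length a)) D m <->
  NoDup D /\ (forall k, In k D -> In k (a ++ [i])) /\ In i D /\ card_is (inter L D) m.
Proof.
  unfold admissible, pos. rewrite firstn_mid.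
  replace (S (length a) - 1) with (length a) by lia. rewrite nth_mid. tauto.
Qed.

Lemma pos_last (a b : list nat) i : a <> [] ->
  exists a1 x, a = a1 ++ [x] /\ pos (a ++ i :: b) (S (length a) - 1) = x /\ last a 0 = x.
Proof.
  intros Ha. destruct (exists_last Ha) as [a1 [x ->]]. exists a1, x.
  split; auto. split.
  - unfold pos. rewrite length_app. simpl.
    replace (length a1 + 1 - 0 - 1) with (length a1) by lia.
    rewrite <- app_assoc. simpl. apply nth_mid.
  - apply last_last.
Qed.

Lemma swap_mid (a1 b : list nat) x i :
  swap_at (a1 ++ [x] ++ i :: b) (S (length a1 + length [x])) = a1 ++ i :: x :: b.
Proof.
  unfold swap_at, pos. simpl length.
  replace (S (length a1 + 1) - 2) with (length a1) by lia.
  replace (S (length a1 + 1) - 1) with (length a1 + 1) by lia.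
  replace (length a1 + 1 - 1) with (length a1 + 0) by lia.
  replace (S (length a1 + 1)) with (length a1 + 2) by lia.
  rewrite firstn_app, firstn_all2 by lia.
  replace (length a1 - length a1) with 0 by lia. simpl firstn.
  rewrite !app_nth2_plus, skipn_app, skipn_all2 by lia.
  replace (length a1 + 2 - length a1) with 2 by lia. simpl. rewrite app_nil_r. auto.
Qed.

Lemma loop_inv {U} (L : nat -> U -> Prop) mstar i :
  forall p j p' C m, Loop L mstar p j p' C m ->
  forall a b, p = a ++ i :: b -> j = S (length a) ->
  (forall y D m0, In y b -> admissible L p j D m0 -> m0 <= mstar y) ->
  exists a0 c, a = a0 ++ c /\ p' = a0 ++ i :: c ++ b /\
    (forall y, In y (c ++ b) -> m <= mstar y) /\
    (a0 = [] \/ mstar (last a0 0) < m) /\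
    ((C = [] /\ m = 0) \/
     ((forall k, In k C -> In k (a0 ++ [i])) /\ In i C /\ card_is (inter L C) m)).
Proof.
  induction 1 as [p j C m Hc Hs | p j C m p' C' m' Hc Hs HL IH];
    intros a b Hp Hj Hb; subst p j.
  - exists a, []. simpl. split; [rewrite app_nil_r; auto|]. split; auto.
    split.
    { intros y Hy. destruct Hc as [[Ha Hm]|[_ [_ ->]]]; [|lia]. eapply Hb; eauto. }
    split.
    { destruct a as [|z a']; [left; auto|right].
      destruct (pos_last (z :: a') b i) as [a1 [x [E1 [E2 E3]]]]; [discriminate|].
      rewrite E3. destruct Hs as [Hs|Hs]; [simpl in Hs; lia|]. rewrite <- E2. exact Hs. }
    destruct Hc as [[Ha Hm]|[_ [-> ->]]]; [right|left; auto].
    apply adm_char in Ha. tauto.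
  - assert (Hne : a <> []).
    { intros ->. apply Hs. left. simpl. lia. }
    destruct (pos_last a b i Hne) as [a1 [x [E1 [E2 E3]]]].
    assert (Hx : m <= mstar x).
    { destruct (Nat.lt_ge_cases (mstar x) m); auto. exfalso. apply Hs. right. rewrite E2; auto. }
    assert (Hsw : swap_at (a ++ i :: b) (S (length a)) = a1 ++ i :: x :: b).
    { subst a. rewrite length_app, <- app_assoc. apply swap_mid. }
    rewrite Hsw in HL.
    assert (Hadm : forall D m0, admissible L (a1 ++ i :: x :: b) (S (length a1)) D m0 ->
                    admissible L (a ++ i :: b) (S (length a)) D m0).
    { intros D m0 HD. apply adm_char in HD. apply adm_char.
      destruct HD as [H1 [H2 H3]]. split; auto. split; auto.
      intros k Hk. apply H2 in Hk. subst a. rewrite <- app_assoc.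
      apply in_app_iff in Hk as [Hk|Hk]; apply in_app_iff; [left; auto|right; right; auto]. }
    assert (Hj : S (length a) - 1 = S (length a1)) by (subst a; rewrite length_app; simpl; lia).
    rewrite Hsw, Hj in IH.
    destruct (IH a1 (x :: b) eq_refl eq_refl) as [a0 [c [F1 [F2 [F3 [F4 F5]]]]]].
    { intros y D m0 Hy HD. apply Hadm in HD. destruct Hy as [<-|Hy].
      - destruct Hc as [[_ Hm]|[Hn _]].
        + specialize (Hm _ _ HD). lia.
        + exfalso. eapply Hn; eauto.
      - eapply Hb; eauto. }
    exists a0, (c ++ [x]). split; [subst; rewrite <- app_assoc; auto|].
    split; [subst; rewrite <- !app_assoc; auto|].
    split; [|auto].
    intros y Hy. apply F3. rewrite <- app_assoc in Hy. exact Hy.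
Qed.

Lemma glob {U} (L : nat -> U -> Prop) perm Cof mstar :
  Run L perm Cof mstar -> forall n,
  length (perm n) = n /\ (forall k, In k (perm n) -> k <= n) /\
  StronglySorted (fun x y => mstar x <= mstar y) (perm n).
Proof.
  intros [H0 HR]. induction n as [|n [IH1 [IH2 IH3]]].
  - rewrite H0. simpl. split; auto. split; [tauto|constructor].
  - specialize (HR (S n) ltac:(lia)). simpl in HR. rewrite Nat.sub_0_r in HR.
    destruct (loop_inv L mstar (S n) _ _ _ _ _ HR (perm n) [] eq_refl ltac:(rewrite IH1; auto))
      as [a0 [c [F1 [F2 [F3 [F4 F5]]]]]].
    { intros y D m0 Hy. destruct Hy. }
    rewrite app_nil_r in F2, F3. rewrite F2. rewrite F1 in IH1, IH2, IH3.
    split; [rewrite length_app in *; simpl; lia|]. split.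
    + intros k Hk. apply in_app_iff in Hk as [Hk|[<-|Hk]]; [|lia|];
        (assert (k <= n) by (apply IH2, in_app_iff; auto)); lia.
    + apply SS_insert; auto.
      intros y Hy. destruct F4 as [->|F4]; [destruct Hy|].
      destruct (exists_last (l := a0) ltac:(intros ->; destruct Hy)) as [a1 [z Ez]].
      rewrite Ez, last_last in F4. rewrite Ez in Hy, IH3.
      apply SS_app_l in IH3. apply in_app_iff in Hy as [Hy|[<-|[]]]; [|lia].
      assert (mstar y <= mstar z) by (apply (SS_app_cross _ a1 [z] IH3 y z Hy); simpl; auto). lia.
Qed.

Theorem mainTheorem10 (U : Type) (L : nat -> U -> Prop)
  (perm : nat -> list nat) (Cof : nat -> list nat) (mstar : nat -> nat) :
  countably_infinite U ->
  (forall i, 1 <= i -> infinite_set (L i)) ->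
  Run L perm Cof mstar ->
  forall i, 1 <= i ->
    (Cof i = nil \/ exists j, In j (Cof i) /\ j <> i /\ j < i) /\
    (forall j, In j (Cof i) -> j <> i -> mstar j < mstar i).
Proof.
  intros _ Hinf HRun i Hi.
  destruct (glob L perm Cof mstar HRun (i - 1)) as [G1 [G2 G3]].
  pose proof HRun as [_ HR]. specialize (HR i Hi).
  destruct (loop_inv L mstar i _ _ _ _ _ HR (perm (i - 1)) [] eq_refl ltac:(rewrite G1; lia))
      as [a0 [c [F1 [F2 [F3 [F4 F5]]]]]].
  { intros y D m0 Hy. destruct Hy. }
  rewrite F1 in G2, G3.
  destruct F5 as [[-> _]|[C1 [C2 C3]]].
  { split; [left; auto|intros j []]. }
  split.
  - right. destruct (classic (exists j, In j (Cof i) /\ j <> i)) as [[j [Hj Hji]]|Hn].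
    + exists j. split; auto. split; auto.
      apply C1 in Hj. apply in_app_iff in Hj as [Hj|[<-|[]]]; [|congruence].
      assert (j <= i - 1) by (apply G2, in_app_iff; auto). lia.
    + exfalso. apply (Hinf i Hi). destruct C3 as [s [_ [_ Hs]]]. exists s.
      intros x Hx. apply Hs. intros k Hk.
      destruct (Nat.eq_dec k i) as [->|Hki]; auto.
      exfalso. apply Hn. eauto.
  - intros j Hj Hji. apply C1 in Hj. apply in_app_iff in Hj as [Hj|[<-|[]]]; [|congruence].
    destruct F4 as [->|F4]; [destruct Hj|].
    destruct (exists_last (l := a0) ltac:(intros ->; destruct Hj)) as [a1 [z Ez]].
    rewrite Ez, last_last in F4. rewrite Ez in Hj, G3.
    apply SS_app_l in G3. apply in_app_iff in Hj as [Hj|[<-|[]]]; [|lia].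
    assert (mstar j <= mstar z) by (apply (SS_app_cross _ a1 [z] G3 j z Hj); simpl; auto). lia.
Qed.
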